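(* In the standing setting, let $(\psi,\alpha),(\phi,\beta)\in\mathcal{A}\times\mathcal{B}$ with liftings $\psi^\uparrow,\phi^\uparrow$, and write $d(g)=\psi^\uparrow(g)\phi^\uparrow(g)^{-1}$ and $e(h)=\phi^\uparrow(h)\psi^\uparrow(h)^{-1}$. Then $(G,r)$ and $(G,r')$ are set-theoretic non-degenerate solutions of the Yang--Baxter equation, where for $g,h\in G$ $$r(g,h)=\Big(d(g)\,h\,d(g)^{-1}\,\beta(g^{-1},h)\,\alpha(g,h),\ \ \psi^\uparrow(h)^{-1}\,d(g)\,h^{-1}\,d(g)^{-1}\,g\,\psi^\uparrow(g)\,h\,\psi^\uparrow(g)^{-1}\,\psi^\uparrow(h)\,\beta(g,h)\,\alpha(h^{-1},g)\Big),$$ $$r'(g,h)=\Big(g\,\psi^\uparrow(g)\,h\,\psi^\uparrow(g)^{-1}\,\phi^\uparrow(h)\,g^{-1}\,\phi^\uparrow(h)^{-1}\,\beta(h,g^{-1})\,\alpha(g,h),\ \ e(h)\,g\,e(h)^{-1}\,\beta(h,g)\,\alpha(h^{-1},g)\Big).$$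
   Context: Standing setting: $(G,\cdot)$ is a group, $K$ is a subgroup of $G$ contained in the centre $Z(G)$, and $A$ is a subgroup with $K\le A\le G$ and $A/K$ abelian. Let $\mathcal{A}=\{\psi\in\operatorname{End}(G/K):\psi(G/K)\le A/K\}$. A lifting of $\psi\in\mathcal{A}$ is any set map $\psi^{\uparrow}:G\to A$ with $\psi^{\uparrow}(g)K=\psi(gK)$ for all $g\in G$. Let $\mathcal{B}$ be the set of maps $\alpha:G\times G\to K$ that are bilinear, i.e. $\alpha(gh,k)=\alpha(g,k)\alpha(h,k)$ and $\alpha(g,hk)=\alpha(g,h)\alpha(g,k)$, and satisfy $\alpha(k,g)=\alpha(g,k)=1$ for all $k\in K$, $g\in G$. A set-theoretic solution of the Yang--Baxter equation is a pair $(X,r)$ with $X\neq\emptyset$ and $r:X\times X\to X\times X$, $r(x,y)=(\sigma_x(y),\tau_y(x))$, a bijection satisfying $(r\times\mathrm{id}_X)(\mathrm{id}_X\times r)(r\times\mathrm{id}_X)=(\mathrm{id}_X\times r)(r\times\mathrm{id}_X)(\mathrm{id}_X\times r)$; it is non-degenerate if all $\sigma_x$ and $\tau_x$ are bijective. *)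

(* Defs.v *)
From mathcomp Require Import ssreflect ssrfun ssrbool.

Set Implicit Arguments.
Unset Strict Implicit.

Record is_group (G : Type) (mul : G -> G -> G) (inv : G -> G) (one : G) : Prop :=
  { grp_mulA : forall x y z, mul x (mul y z) = mul (mul x y) z;
    grp_mul1g : forall x, mul one x = x;
    grp_mulVg : forall x, mul (inv x) x = one }.

Definition is_subgroup (G : Type) (mul : G -> G -> G) (inv : G -> G) (one : G)
    (H : G -> Prop) : Prop :=
  H one /\ (forall x y, H x -> H y -> H (mul x y)) /\ (forall x, H x -> H (inv x)).

Definition central (G : Type) (mul : G -> G -> G) (H : G -> Prop) : Prop :=
  forall k g, H k -> mul k g = mul g k.

(* A/K is abelian: (aK)(bK) = (bK)(aK), i.e. (ba)^{-1}(ab) \in K. *)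
Definition quot_abelian (G : Type) (mul : G -> G -> G) (inv : G -> G)
    (K A : G -> Prop) : Prop :=
  forall a b, A a -> A b -> K (mul (inv (mul b a)) (mul a b)).

(* f : G -> A is a lifting of some psi \in End(G/K) with psi(G/K) <= A/K:
   the map gK |-> f(g)K is well defined and is an endomorphism of G/K
   (its image then automatically lies in A/K since f(g) \in A).
   Conversely every lifting of every psi in the set \mathcal{A} satisfies this,
   and psi is determined by f (psi(gK) = f(g)K). *)
Definition lifting_in_calA (G : Type) (mul : G -> G -> G) (inv : G -> G)
    (K A : G -> Prop) (f : G -> G) : Prop :=
  (forall g, A (f g)) /\
  (forall g h, K (mul (inv g) h) -> K (mul (inv (f g)) (f h))) /\
  (forall g h, K (mul (inv (f (mul g h))) (mul (f g) (f h)))).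

Definition in_calB (G : Type) (mul : G -> G -> G) (one : G)
    (K : G -> Prop) (alpha : G -> G -> G) : Prop :=
  (forall g h, K (alpha g h)) /\
  (forall g h k, alpha (mul g h) k = mul (alpha g k) (alpha h k)) /\
  (forall g h k, alpha g (mul h k) = mul (alpha g h) (alpha g k)) /\
  (forall k g, K k -> alpha k g = one /\ alpha g k = one).

Definition r12 (X : Type) (r : X * X -> X * X) (t : X * X * X) : X * X * X :=
  let: (x, y, z) := t in let: (a, b) := r (x, y) in (a, b, z).
Definition r23 (X : Type) (r : X * X -> X * X) (t : X * X * X) : X * X * X :=
  let: (x, y, z) := t in let: (b, c) := r (y, z) in (x, b, c).

Definition is_YB_solution (X : Type) (r : X * X -> X * X) : Prop :=
  inhabited X /\ bijective r /\
  (forall t, r12 r (r23 r (r12 r t)) = r23 r (r12 r (r23 r t))).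

(* r(x,y) = (sigma_x(y), tau_y(x)); non-degenerate: all sigma_x, tau_x bijective *)
Definition non_degenerate (X : Type) (r : X * X -> X * X) : Prop :=
  (forall x, bijective (fun y => (r (x, y)).1)) /\
  (forall x, bijective (fun y => (r (y, x)).2)).

Definition sol_r (G : Type) (mul : G -> G -> G) (inv : G -> G)
    (psi phi : G -> G) (alpha beta : G -> G -> G) (p : G * G) : G * G :=
  let: (g, h) := p in
  let d := fun x => mul (psi x) (inv (phi x)) in
  ( mul (mul (mul (mul (d g) h) (inv (d g))) (beta (inv g) h)) (alpha g h),
    mul (mul (mul (mul (mul (mul (mul (mul (mul (mul
      (inv (psi h)) (d g)) (inv h)) (inv (d g))) g) (psi g)) h) (inv (psi g)))
      (psi h)) (beta g h)) (alpha (inv h) g) ).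

Definition sol_r' (G : Type) (mul : G -> G -> G) (inv : G -> G)
    (psi phi : G -> G) (alpha beta : G -> G -> G) (p : G * G) : G * G :=
  let: (g, h) := p in
  let e := fun x => mul (phi x) (inv (psi x)) in
  ( mul (mul (mul (mul (mul (mul (mul (mul
      g (psi g)) h) (inv (psi g))) (phi h)) (inv g)) (inv (phi h)))
      (beta h (inv g))) (alpha g h),
    mul (mul (mul (mul (e h) g) (inv (e h))) (beta h g)) (alpha (inv h) g) ).

(* Main.v *)
Require Import Defs.
From mathcomp Require Import ssreflect ssrfun ssrbool.
Set Implicit Arguments.
Unset Strict Implicit.

Section GroupLemmas.
Variables (G : Type) (mul : G -> G -> G) (inv : G -> G) (one : G).
Hypothesis HG : is_group mul inv one.
Local Notation "x ** y" := (mul x y) (at level 40, left associativity).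
Local Notation "x ^-1" := (inv x).

Lemma gA x y z : x ** (y ** z) = x ** y ** z.
Proof. exact: (grp_mulA HG x y z). Qed.
Lemma g1m x : one ** x = x.
Proof. exact: (grp_mul1g HG x). Qed.
Lemma gVm x : x^-1 ** x = one.
Proof. exact: (grp_mulVg HG x). Qed.
Lemma gmV x : x ** x^-1 = one.
Proof.
have e1 : x ** x^-1 = (x^-1)^-1 ** x^-1 ** (x ** x^-1).
  by rewrite gVm g1m.
rewrite e1 -!gA (gA x^-1) gVm g1m gVm //.
Qed.
Lemma gm1 x : x ** one = x.
Proof. by rewrite -(gVm x) gA gmV g1m. Qed.
Lemma gmVK x y : y ** x ** x^-1 = y.
Proof. by rewrite -gA gmV gm1. Qed.
Lemma gmKV x y : y ** x^-1 ** x = y.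
Proof. by rewrite -gA gVm gm1. Qed.
Lemma gKm x y : x^-1 ** (x ** y) = y.
Proof. by rewrite gA gVm g1m. Qed.
Lemma gKVm x y : x ** (x^-1 ** y) = y.
Proof. by rewrite gA gmV g1m. Qed.
Lemma gcanl x y z : x ** y = x ** z -> y = z.
Proof. by move=> e; rewrite -(gKm x y) e gKm. Qed.
Lemma gcanr x y z : y ** x = z ** x -> y = z.
Proof. by move=> e; rewrite -(gmVK x y) e gmVK. Qed.
Lemma ginv_uniq x y : x ** y = one -> y = x^-1.
Proof. by move=> e; apply: (@gcanl x); rewrite e gmV. Qed.
Lemma gVK x : (x^-1)^-1 = x.
Proof. by symmetry; apply: ginv_uniq; rewrite gVm. Qed.
Lemma gVM x y : (x ** y)^-1 = y^-1 ** x^-1.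
Proof. by symmetry; apply: ginv_uniq; rewrite gA gmVK gmV. Qed.
Lemma gV1 : one^-1 = one.
Proof. by symmetry; apply: ginv_uniq; rewrite g1m. Qed.
End GroupLemmas.
Arguments gcanl [G mul inv one] HG x [y z].
Arguments gcanr [G mul inv one] HG x [y z].

Section Brace.
Variables (G : Type) (pl : G -> G -> G) (ng : G -> G) (z : G).
Variables (cm : G -> G -> G) (bar : G -> G) (e : G).
Hypothesis Hp : is_group pl ng z.
Hypothesis Hc : is_group cm bar e.
Variable L : G -> G -> G.
Hypothesis HL1 : forall a b, cm a b = pl a (L a b).
Hypothesis HL2 : forall a b c, L a (pl b c) = pl (L a b) (L a c).
Variable r : G * G -> G * G.
Hypothesis Hr : forall a b, (r (a, b)).1 = L a b /\ cm (r (a, b)).1 (r (a, b)).2 = cm a b.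

Let T b a := (r (a, b)).2.

Lemma Lz a : L a z = z.
Proof.
apply: (gcanl Hp (L a z)); rewrite -HL2 (gm1 Hp) (gm1 Hp) //.
Qed.
Lemma ez : e = z.
Proof. by rewrite -{1}(grp_mul1g Hc z) HL1 Lz (gm1 Hp). Qed.
Lemma Lng a b : L a (ng b) = ng (L a b).
Proof. apply: (ginv_uniq Hp); by rewrite -HL2 (gmV Hp) Lz. Qed.
Lemma Lcomp a b c : L (cm a b) c = L a (L b c).
Proof.
have H := grp_mulA Hc a b c.
rewrite [cm b c]HL1 [cm a _]HL1 HL2 (grp_mulA Hp) -HL1 [cm (cm a b) c]HL1 in H.
symmetry; exact: (gcanl Hp _ H).
Qed.
Lemma Le c : L e c = c.
Proof. by have := grp_mul1g Hc c; rewrite HL1 ez (grp_mul1g Hp). Qed.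
Lemma Lbar a : L a (bar a) = ng a.
Proof. apply: (ginv_uniq Hp); by rewrite -HL1 (gmV Hc) ez. Qed.
Lemma Tdef a b : cm (L a b) (T b a) = cm a b.
Proof. by case: (Hr a b) => <- ->. Qed.
Lemma r_eta a b : r (a, b) = (L a b, T b a).
Proof. by case: (Hr a b) => <- _; rewrite /T; case: (r (a, b)). Qed.
Lemma T_anti a b c : T c (T b a) = T (cm b c) a.
Proof.
set w := T b a; set u := L a b.
have uw : cm u w = cm a b by exact: Tdef.
apply: (gcanl Hc (L a (cm b c))); rewrite Tdef.
have -> : L a (cm b c) = cm u (L w c).
  rewrite HL1 HL2 -Lcomp -uw Lcomp -HL1 //.
by rewrite -(grp_mulA Hc) Tdef (grp_mulA Hc) uw (grp_mulA Hc).
Qed.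

Lemma brace_YB : is_YB_solution r.
Proof.
split; first by constructor; exact: z.
split.
  pose rinv (p : G * G) := let: (u, v) := p in
     let x := pl (cm u v) (ng u) in (x, cm (bar x) (cm u v)).
  exists rinv.
    case=> a b; rewrite r_eta /rinv Tdef HL1 (gmVK Hp) -HL1.
    by rewrite (grp_mulA Hc) (grp_mulVg Hc) (grp_mul1g Hc).
  case=> u v; rewrite /rinv.
  set x := pl (cm u v) (ng u).
  have xy : cm x (cm (bar x) (cm u v)) = cm u v.
    by rewrite (grp_mulA Hc) (gmV Hc) (grp_mul1g Hc).
  have Lxy : L x (cm (bar x) (cm u v)) = u.
    apply: (gcanl Hp x); rewrite -HL1 xy /x (gmKV Hp) //.
  rewrite r_eta Lxy; congr (_, _).
  apply: (gcanl Hc u); rewrite -{1}Lxy Tdef xy //.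
case=> [[x y] w]; rewrite /r12 /r23 !r_eta.
set a1 := L (L x y) (L (T y x) w).
set a2 := T (L (T y x) w) (L x y).
set a3 := T w (T y x).
set b1 := L x (L y w).
set b2 := L (T (L y w) x) (T w y).
set b3 := T (T w y) (T (L y w) x).
have e1 : a1 = b1 by rewrite /a1 /b1 -Lcomp Tdef Lcomp.
have e3 : a3 = b3 by rewrite /a3 /b3 !T_anti Tdef.
have p1 : cm a1 (cm a2 a3) = cm x (cm y w).
  rewrite /a1 /a2 /a3 (grp_mulA Hc) Tdef -(grp_mulA Hc).
  by rewrite Tdef (grp_mulA Hc) Tdef -(grp_mulA Hc).
have p2 : cm b1 (cm b2 b3) = cm x (cm y w).
  by rewrite /b1 /b2 /b3 Tdef (grp_mulA Hc) Tdef -(grp_mulA Hc) Tdef.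
have e2 : a2 = b2.
  apply: (gcanr Hc a3); apply: (gcanl Hc a1).
  by rewrite p1 e1 e3 p2.
by rewrite e1 e2 e3.
Qed.

Lemma brace_nd : non_degenerate r.
Proof.
split=> x.
  exists (L (bar x)) => y /=; rewrite r_eta /= -Lcomp.
    by rewrite (grp_mulVg Hc) Le.
  by rewrite (gmV Hc) Le.
exists (fun v => cm (cm (bar (L v (bar x))) v) (bar x)) => [a|v] /=.
  rewrite r_eta /=.
  set v := T x a; set u := L a x.
  have uv : cm u v = cm a x by exact: Tdef.
  have -> : L v (bar x) = bar u.
    apply: (ginv_uniq Hc); rewrite HL1 -Lcomp uv Lcomp Lbar Lng.
    by rewrite (gmV Hp) ez.
  by rewrite (gVK Hc) uv (gmVK Hc).
set u := bar (L v (bar x)).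
set a := cm (cm u v) (bar x).
have Lvb : L v (bar x) = bar u by rewrite /u (gVK Hc).
have au : pl a u = cm u v.
  rewrite /a -(grp_mulA Hc) [cm v _]HL1 Lvb HL1 HL2 Lbar.
  by rewrite (grp_mulA Hp) (gmKV Hp) -HL1.
have Lax : L a x = u.
  by apply: (gcanl Hp a); rewrite -HL1 au /a (gmKV Hc).
rewrite r_eta /=.
apply: (gcanl Hc u); rewrite -{1}Lax Tdef /a (gmKV Hc) //.
Qed.

End Brace.

Lemma brace_sol G (pl : G -> G -> G) ng z cm bar e L (r : G * G -> G * G) :
  is_group pl ng z -> is_group cm bar e ->
  (forall a b, cm a b = pl a (L a b)) ->
  (forall a b c, L a (pl b c) = pl (L a b) (L a c)) ->
  (forall a b, (r (a, b)).1 = L a b /\ cm (r (a, b)).1 (r (a, b)).2 = cm a b) ->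
  is_YB_solution r /\ non_degenerate r.
Proof.
move=> Hp Hc HL1 HL2 Hr; split; [exact: (brace_YB Hp Hc HL1 HL2 Hr) | exact: (brace_nd Hp Hc HL1 HL2 Hr)].
Qed.

Lemma brace_opp G (pl : G -> G -> G) ng z cm bar e L (r : G * G -> G * G) :
  is_group pl ng z -> is_group cm bar e ->
  (forall a b, cm a b = pl a (L a b)) ->
  (forall a b c, L a (pl b c) = pl (L a b) (L a c)) ->
  (forall a b, (r (a, b)).1 = pl (cm a b) (ng a) /\
               cm (r (a, b)).1 (r (a, b)).2 = cm a b) ->
  is_YB_solution r /\ non_degenerate r.
Proof.
move=> Hp Hc HL1 HL2 Hr.
pose pl' x y := pl y x.
have Hp' : is_group pl' ng z.
  split=> [x y w|x|x]; rewrite /pl'.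
  - by rewrite (grp_mulA Hp).
  - exact: (gm1 Hp).
  - exact: (gmV Hp).
apply: (brace_sol (L := fun a b => pl (cm a b) (ng a)) Hp' Hc) => //.
  by move=> a b; rewrite /pl' (gmKV Hp).
move=> a b c; rewrite /pl' !HL1 HL2 !(grp_mulA Hp) (gmKV Hp) //.
Qed.

Unset Implicit Arguments.

Section Concrete.
Variables (G : Type) (mul : G -> G -> G) (inv : G -> G) (one : G) (K A : G -> Prop).
Hypothesis HG : is_group mul inv one.
Hypothesis HK : is_subgroup mul inv one K.
Hypothesis HA : is_subgroup mul inv one A.
Hypothesis Hcen : central mul K.
Hypothesis HKA : forall k, K k -> A k.
Hypothesis Hab : quot_abelian mul inv K A.
Local Notation "x ** y" := (mul x y) (at level 40, left associativity).
Local Notation "x ^-1" := (inv x).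

Local Notation gA := (gA HG).
Local Notation g1m := (g1m HG).
Local Notation gVm := (gVm HG).
Local Notation gmV := (gmV HG).
Local Notation gm1 := (gm1 HG).
Local Notation gmVK := (gmVK HG).
Local Notation gmKV := (gmKV HG).
Local Notation gKm := (gKm HG).
Local Notation gKVm := (gKVm HG).
Local Notation gVK := (gVK HG).
Local Notation gVM := (gVM HG).
Local Notation gV1 := (gV1 HG).

Lemma K1 : K one. Proof. by case: HK. Qed.
Lemma KM x y : K x -> K y -> K (x ** y). Proof. by case: HK => _ []; auto. Qed.
Lemma KV x : K x -> K (x^-1). Proof. by case: HK => _ []; auto. Qed.
Lemma AM x y : A x -> A y -> A (x ** y). Proof. by case: HA => _ []; auto. Qed.
Lemma AV x : A x -> A (x^-1). Proof. by case: HA => _ []; auto. Qed.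
Lemma Kc k x : K k -> k ** x = x ** k. Proof. exact: Hcen. Qed.
Lemma cRK x k y : K k -> x ** k ** y = x ** y ** k.
Proof. by move=> Hk; rewrite -gA (Kc k y Hk) gA. Qed.
Lemma conjK x c k y : K k -> x ** (c ** k) ** y ** (c ** k)^-1 = x ** c ** y ** c^-1.
Proof.
move=> Hk; rewrite gVM !gA (cRK _ k y) // gmVK //.
Qed.
Lemma conjK1 c k y : K k -> (c ** k) ** y ** (c ** k)^-1 = c ** y ** c^-1.
Proof.
move=> Hk; rewrite gVM !gA (cRK _ k y) // gmVK //.
Qed.
Lemma eqK a b : K (a^-1 ** b) -> exists2 k, K k & b = a ** k.
Proof. by move=> H; exists (a^-1 ** b) => //; rewrite gKVm. Qed.
Lemma Acomm a b : A a -> A b -> exists2 k, K k & a ** b ** a^-1 = b ** k.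
Proof.
move=> Ha Hb; have H := Hab a b Ha Hb.
have [k Hk e] := eqK _ _ H.
exists k => //; rewrite e cRK // gmVK //.
Qed.

Section Lift.
Variable f : G -> G.
Hypothesis Hf : lifting_in_calA mul inv K A f.

Lemma fA x : A (f x). Proof. by case: Hf. Qed.
Lemma fM x y : exists2 k, K k & f (x ** y) = f x ** f y ** k.
Proof.
case: Hf => _ [_ H]; have [k Hk e] := eqK _ _ (H x y).
exists k^-1; first exact: KV.
by rewrite e gmVK.
Qed.
Lemma f1 : K (f one).
Proof.
have [k Hk e] := fM one one; move: e; rewrite g1m => e.
have e' : f one ** k = one.
  by apply: (gcanl HG (f one)); rewrite gA -e gm1.
have -> : f one = k^-1 by rewrite -(gmVK k (f one)) e' g1m.
exact: KV.
Qed.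
Lemma fK x k : K k -> exists2 k', K k' & f (x ** k) = f x ** k'.
Proof.
move=> Hk; case: Hf => _ [H _]; apply: eqK; apply: H; rewrite gKm //.
Qed.
Lemma fV x : exists2 k, K k & f (x^-1) = (f x)^-1 ** k.
Proof.
have [k Hk e] := fM x^-1 x; move: e; rewrite gVm => e.
have Hw : K (f one ** k^-1) by apply: KM; [exact: f1 | exact: KV].
exists (f one ** k^-1) => //.
by rewrite -(Kc _ _ Hw) e !gmVK.
Qed.
Lemma fconj c y : exists2 k, K k & f (c ** y ** c^-1) = f y ** k.
Proof.
have [k1 Hk1 ->] := fM (c ** y) c^-1.
have [k2 Hk2 ->] := fM c y.
have [k3 Hk3 ->] := fV c.
rewrite gA (cRK _ k2) //.
have [k4 Hk4 ->] := Acomm (f c) (f y) (fA c) (fA y).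
exists (k4 ** k2 ** k3 ** k1); last by rewrite !gA.
by repeat apply: KM.
Qed.
Lemma fop x c y k : K k -> exists2 k', K k' & f (x ** c ** y ** c^-1 ** k) = f x ** f y ** k'.
Proof.
move=> Hk; have [k1 Hk1 ->] := fK (x ** c ** y ** c^-1) k Hk.
rewrite -!gA; have [k2 Hk2 ->] := fM x (c ** (y ** c^-1)).
rewrite !gA; have [k3 Hk3 ->] := fconj c y.
exists (k3 ** k2 ** k1); last by rewrite !gA.
by repeat apply: KM.
Qed.
End Lift.

Section Form.
Variable gam : G -> G -> G.
Hypothesis Hgam : in_calB mul one K gam.
Lemma gK x y : K (gam x y). Proof. by case: Hgam. Qed.
Lemma gMl x y z : gam (x ** y) z = gam x z ** gam y z. Proof. by case: Hgam => _ []. Qed.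
Lemma gMr x y z : gam x (y ** z) = gam x y ** gam x z. Proof. by case: Hgam => _ [_ []]. Qed.
Lemma gKl k x : K k -> gam k x = one. Proof. by case: Hgam => _ [_ [_ H]] /(H k x) []. Qed.
Lemma gKr k x : K k -> gam x k = one. Proof. by case: Hgam => _ [_ [_ H]] /(H k x) []. Qed.
Lemma gVl x y : gam x^-1 y = (gam x y)^-1.
Proof.
apply: ginv_uniq HG _ _ _; rewrite -gMl gmV gKl //; exact: K1.
Qed.
Lemma gVr x y : gam x y^-1 = (gam x y)^-1.
Proof.
apply: ginv_uniq HG _ _ _; rewrite -gMr gmV gKr //; exact: K1.
Qed.
Lemma gconjl c x y : gam (c ** x ** c^-1) y = gam x y.
Proof. by rewrite !gMl gVl (Kc (gam c y) (gam x y) (gK c y)) gmVK. Qed.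
Lemma gconjr c x y : gam y (c ** x ** c^-1) = gam y x.
Proof. by rewrite !gMr gVr (Kc (gam y c) (gam y x) (gK y c)) gmVK. Qed.
Lemma gconjl2 c x y : gam (c^-1 ** x ** c) y = gam x y.
Proof. by rewrite -{2}(gVK c) gconjl. Qed.
Lemma gconjr2 c x y : gam y (c^-1 ** x ** c) = gam y x.
Proof. by rewrite -{2}(gVK c) gconjr. Qed.
Lemma gKl' x k y : K k -> gam (x ** k) y = gam x y.
Proof. by move=> Hk; rewrite gMl (gKl k y Hk) gm1. Qed.
Lemma gKr' x k y : K k -> gam y (x ** k) = gam y x.
Proof. by move=> Hk; rewrite gMr (gKr k y Hk) gm1. Qed.
Lemma gopl x c y k z : K k -> gam (x ** c ** y ** c^-1 ** k) z = gam x z ** gam y z.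
Proof. by move=> Hk; rewrite gKl' // -!gA gMl !gA gconjl. Qed.
Lemma gopr x c y k z : K k -> gam z (x ** c ** y ** c^-1 ** k) = gam z x ** gam z y.
Proof. by move=> Hk; rewrite gKr' // -!gA gMr !gA gconjr. Qed.
End Form.


Definition op (f : G -> G) (gam : G -> G -> G) x y := x ** f x ** y ** (f x)^-1 ** gam x y.
Definition iop (f : G -> G) (gam : G -> G -> G) x := (f x)^-1 ** x^-1 ** f x ** gam x x.

Section Op.
Variable f : G -> G.
Hypothesis Hf : lifting_in_calA mul inv K A f.
Variable gam : G -> G -> G.
Hypothesis Hgam : in_calB mul one K gam.

Lemma op_assoc x y z : op f gam x (op f gam y z) = op f gam (op f gam x y) z.
Proof.
rewrite /op.
have [k Hk ->] := fop f Hf x (f x) y (gam x y) (gK gam Hgam x y).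
rewrite conjK //.
rewrite (gopl gam Hgam) ?(gK gam Hgam) //.
rewrite (gopr gam Hgam y (f y) z (gam y z) x (gK gam Hgam y z)).
rewrite !gVM !gA.
rewrite !(cRK _ (gam y z) _ (gK gam Hgam y z)) !(cRK _ (gam x y) _ (gK gam Hgam x y)) gmKV //.
exact: (gK gam Hgam x y).
Qed.

Lemma op_1 y : op f gam one y = y.
Proof.
rewrite /op g1m (Kc (f one) y (f1 f Hf)) gmVK (gKl gam Hgam one y K1) gm1 //.
Qed.

Lemma f_iop x : exists2 k, K k & f (iop f gam x) = (f x)^-1 ** k.
Proof.
rewrite /iop; have [k1 Hk1 ->] := fK f Hf ((f x)^-1 ** x^-1 ** f x) (gam x x) (gK gam Hgam x x).
rewrite -{2}(gVK (f x)); have [k2 Hk2 ->] := fconj f Hf (f x)^-1 x^-1.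
have [k3 Hk3 ->] := fV f Hf x.
exists (k3 ** k2 ** k1); first by repeat apply: KM.
by rewrite !gA.
Qed.

Lemma op_V x : op f gam (iop f gam x) x = one.
Proof.
rewrite /op; have [k Hk ->] := f_iop x.
rewrite conjK //.
rewrite /iop (gKl' gam Hgam _ _ _ (gK gam Hgam x x)) (gconjl2 gam Hgam) (gVl gam Hgam).
rewrite gVK !(cRK _ (gam x x) _ (gK gam Hgam x x)).
by rewrite gmKV gmVK gmKV gVm.
Qed.

Lemma op_group : is_group (op f gam) (iop f gam) one.
Proof. split; [exact: op_assoc | exact: op_1 | exact: op_V]. Qed.
End Op.

Lemma conjA x a b y : A a -> A b ->
  x ** a ** b ** a^-1 ** y ** a ** b^-1 ** a^-1 = x ** b ** y ** b^-1.
Proof.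
move=> Ha Hb; have [k Hk e] := Acomm a b Ha Hb.
have e' : a ** b^-1 ** a^-1 = (b ** k)^-1 by rewrite -e !gVM gVK !gA.
have -> : x ** a ** b ** a^-1 = x ** (a ** b ** a^-1) by rewrite !gA.
have -> : x ** (a ** b ** a^-1) ** y ** a ** b^-1 ** a^-1
        = x ** (a ** b ** a^-1) ** y ** (a ** b^-1 ** a^-1) by rewrite !gA.
by rewrite e e' conjK.
Qed.

Lemma conjA2 x a b y : A a -> A b ->
  x ** a^-1 ** b ** a ** y ** a^-1 ** b^-1 ** a = x ** b ** y ** b^-1.
Proof.
move=> Ha Hb; rewrite -{2}(gVK a) -{4}(gVK a); apply: conjA => //; exact: AV.
Qed.

Lemma fL (f : G -> G) (Hf : lifting_in_calA mul inv K A f) c y k1 k2 :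
  K k1 -> K k2 -> exists2 k, K k & f (c ** y ** c^-1 ** k1 ** k2) = f y ** k.
Proof.
move=> H1 H2.
have [k3 Hk3 ->] := fK f Hf (c ** y ** c^-1 ** k1) k2 H2.
have [k4 Hk4 ->] := fK f Hf (c ** y ** c^-1) k1 H1.
have [k5 Hk5 ->] := fconj f Hf c y.
exists (k5 ** k4 ** k3); [by repeat apply: KM | by rewrite !gA].
Qed.

Ltac pushK t H := rewrite ?(Kc t _ H) ?(cRK _ t _ H).
Ltac cancK x H := pushK x H; pushK (x^-1) (KV _ H); rewrite gmVK.

Section Main.
Variables (P Q : G -> G) (al be : G -> G -> G).
Hypothesis HP : lifting_in_calA mul inv K A P.
Hypothesis HQ : lifting_in_calA mul inv K A Q.
Hypothesis Hal : in_calB mul one K al.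
Hypothesis Hbe : in_calB mul one K be.

Definition dd g := P g ** (Q g)^-1.
Definition LL g h := dd g ** h ** (dd g)^-1 ** be g^-1 h ** al g h.

Lemma G1 g h : op P al g h = op Q be g (LL g h).
Proof.
rewrite /op /LL (gKr' be Hbe _ _ _ (gK al Hal g h)) (gKr' be Hbe _ _ _ (gK be Hbe _ h)).
rewrite (gconjr be Hbe) /dd !gVM gVK !gA.
rewrite !(cRK _ (be g^-1 h) _ (gK be Hbe _ _)) !(cRK _ (al g h) _ (gK al Hal _ _)).
rewrite conjA; try (exact: fA Q HQ _); try (exact: fA P HP _).
by rewrite (gVl be Hbe g h) gmVK.
Qed.


Lemma ddA g : A (dd g).
Proof. rewrite /dd; apply: AM; [exact: (fA P HP g) | apply: AV; exact: (fA Q HQ g)]. Qed.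

Lemma G2 g b c : LL g (op Q be b c) = op Q be (LL g b) (LL g c).
Proof.
rewrite /op {1}/LL.
rewrite (gopr be Hbe _ _ _ _ _ (gK be Hbe b c)) (gopr al Hal _ _ _ _ _ (gK be Hbe b c)).
have [k Hk ->] := fL Q HQ (dd g) b _ _ (gK be Hbe g^-1 b) (gK al Hal g b).
rewrite conjK //.
rewrite /LL (gKl' be Hbe _ _ _ (gK al Hal _ _)) (gKl' be Hbe _ _ _ (gK be Hbe _ _)) (gconjl be Hbe).
rewrite (gKr' be Hbe _ _ _ (gK al Hal _ _)) (gKr' be Hbe _ _ _ (gK be Hbe _ _)) (gconjr be Hbe).
move: (dd g) (ddA g) => D HD.
rewrite !gA.
rewrite !(cRK _ (be g^-1 b) _ (gK be Hbe _ _)) !(cRK _ (be g^-1 c) _ (gK be Hbe _ _)).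
rewrite !(cRK _ (al g b) _ (gK al Hal _ _)) !(cRK _ (al g c) _ (gK al Hal _ _)).
rewrite !(cRK _ (be b c) _ (gK be Hbe _ _)).
do 5 congr (_ ** _).
apply: (gcanr HG D); rewrite gmKV conjA2 //; exact: (fA Q HQ b).
Qed.

Definition SR2 g h := (P h)^-1 ** dd g ** h^-1 ** (dd g)^-1 ** g ** P g ** h ** (P g)^-1 ** P h ** be g h ** al h^-1 g.

Lemma sol_r_eq g h : sol_r mul inv P Q al be (g, h) = (LL g h, SR2 g h).
Proof. by []. Qed.

Lemma G4 g h : op P al (LL g h) (SR2 g h) = op P al g h.
Proof.
rewrite /op.
have [k Hk ->] := fL P HP (dd g) h _ _ (gK be Hbe g^-1 h) (gK al Hal g h).
rewrite conjK // {1}/LL (gKl' al Hal _ _ _ (gK al Hal _ _)) (gKl' al Hal _ _ _ (gK be Hbe _ _)) (gconjl al Hal).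
rewrite /SR2 (gKr' al Hal _ _ _ (gK al Hal _ _)) (gKr' al Hal _ _ _ (gK be Hbe _ _)).
rewrite /LL; move: (dd g) => D.
have -> : al h ((P h)^-1 ** D ** h^-1 ** D^-1 ** g ** P g ** h ** (P g)^-1 ** P h) = al h g.
  rewrite !(gMr al Hal) !(gVr al Hal).
  cancK (al h (P h)) (gK al Hal h (P h)).
  cancK (al h D) (gK al Hal h D).
  cancK (al h h) (gK al Hal h h).
  cancK (al h (P g)) (gK al Hal h (P g)).
  done.
rewrite !gA (gVl be Hbe) (gVl al Hal).
cancK (be g h) (gK be Hbe g h).
cancK (al h g) (gK al Hal h g).
pushK (al g h) (gK al Hal g h).
rewrite !gmVK gmKV gmVK gmV g1m //.
Qed.
Definition SRp1 g h := g ** P g ** h ** (P g)^-1 ** Q h ** g^-1 ** (Q h)^-1 ** be h g^-1 ** al g h.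
Definition ee h := Q h ** (P h)^-1.
Definition SRp2 g h := ee h ** g ** (ee h)^-1 ** be h g ** al h^-1 g.

Lemma sol_r'_eq g h : sol_r' mul inv P Q al be (g, h) = (SRp1 g h, SRp2 g h).
Proof. by []. Qed.

Lemma G5 g h : SRp1 g h = op Q be (op P al g h) (iop Q be g).
Proof.
rewrite /op.
have [k Hk ->] := fop Q HQ g (P g) h (al g h) (gK al Hal g h).
rewrite conjK // (gopl be Hbe _ _ _ _ _ (gK al Hal g h)) /iop.
rewrite !(gKr' be Hbe _ _ _ (gK be Hbe g g)) !(gconjr2 be Hbe) (gVr be Hbe g g).
rewrite !gVM !gA.
cancK (be g g) (gK be Hbe g g).
pushK (be h g^-1) (gK be Hbe h g^-1).
pushK (al g h) (gK al Hal g h).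
rewrite conjA; try (exact: fA Q HQ _).
by [].
Qed.
Lemma P_SRp1 g h : exists2 k, K k & P (SRp1 g h) = P h ** k.
Proof.
rewrite /SRp1.
have [k1 Hk1 ->] := fK P HP (g ** P g ** h ** (P g)^-1 ** Q h ** g^-1 ** (Q h)^-1 ** be h g^-1) _ (gK al Hal g h).
have [k2 Hk2 ->] := fK P HP (g ** P g ** h ** (P g)^-1 ** Q h ** g^-1 ** (Q h)^-1) _ (gK be Hbe h g^-1).
have -> : g ** P g ** h ** (P g)^-1 ** Q h ** g^-1 ** (Q h)^-1
   = g ** (P g ** h ** (P g)^-1) ** (Q h ** g^-1 ** (Q h)^-1) by rewrite !gA.
have [k3 Hk3 ->] := fM P HP (g ** (P g ** h ** (P g)^-1)) (Q h ** g^-1 ** (Q h)^-1).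
have [k4 Hk4 ->] := fM P HP g (P g ** h ** (P g)^-1).
have [k5 Hk5 ->] := fconj P HP (P g) h.
have [k6 Hk6 ->] := fconj P HP (Q h) g^-1.
have [k7 Hk7 ->] := fV P HP g.
rewrite !gA.
pushK k5 Hk5; pushK k4 Hk4.
have [k8 Hk8 ->] := Acomm (P g) (P h) (fA P HP g) (fA P HP h).
exists (k8 ** k7 ** k6 ** k3 ** k2 ** k1 ** k5 ** k4); first by repeat apply: KM.
by rewrite !gA.
Qed.

Lemma G6 g h : op P al (SRp1 g h) (SRp2 g h) = op P al g h.
Proof.
rewrite {1}/op.
have [k Hk ->] := P_SRp1 g h.
rewrite conjK //.
rewrite {1}/SRp1 (gKl' al Hal _ _ _ (gK al Hal _ _)) (gKl' al Hal _ _ _ (gK be Hbe _ _)).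
rewrite {1}/SRp2 (gKr' al Hal _ _ _ (gK al Hal _ _)) (gKr' al Hal _ _ _ (gK be Hbe _ _)) (gconjr al Hal).
have -> : al (g ** P g ** h ** (P g)^-1 ** Q h ** g^-1 ** (Q h)^-1) g = al h g.
  rewrite !(gMl al Hal) !(gVl al Hal).
  cancK (al g g) (gK al Hal g g).
  cancK (al (P g) g) (gK al Hal (P g) g).
  cancK (al (Q h) g) (gK al Hal (Q h) g).
  done.
rewrite /SRp1 /SRp2 /ee /op !gVM gVK !gA (gVr be Hbe) (gVl al Hal).
pushK ((be h g)^-1) (KV _ (gK be Hbe h g)); pushK (be h g) (gK be Hbe h g).
rewrite gmKV.
cancK (al h g) (gK al Hal h g).
pushK (al g h) (gK al Hal g h).
rewrite conjA; try (exact: fA Q HQ _); try (exact: fA P HP _).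
by rewrite gmKV gmKV gmVK.
Qed.
Lemma main_r : is_YB_solution (sol_r mul inv P Q al be) /\ non_degenerate (sol_r mul inv P Q al be).
Proof.
apply: (brace_sol (op_group Q HQ be Hbe) (op_group P HP al Hal) G1 G2).
by move=> a b; rewrite sol_r_eq /=; split; [| exact: G4].
Qed.

Lemma main_r' : is_YB_solution (sol_r' mul inv P Q al be) /\ non_degenerate (sol_r' mul inv P Q al be).
Proof.
apply: (brace_opp (op_group Q HQ be Hbe) (op_group P HP al Hal) G1 G2).
by move=> a b; rewrite sol_r'_eq /=; split; [exact: G5 | exact: G6].
Qed.
End Main.
End Concrete.

Theorem mainTheorem14 (G : Type) (mul : G -> G -> G) (inv : G -> G) (one : G)
    (K A : G -> Prop) (psi_up phi_up : G -> G) (alpha beta : G -> G -> G) :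
  is_group mul inv one ->
  is_subgroup mul inv one K -> is_subgroup mul inv one A ->
  central mul K -> (forall k, K k -> A k) -> quot_abelian mul inv K A ->
  lifting_in_calA mul inv K A psi_up -> lifting_in_calA mul inv K A phi_up ->
  in_calB mul one K alpha -> in_calB mul one K beta ->
  (is_YB_solution (sol_r mul inv psi_up phi_up alpha beta) /\
   non_degenerate (sol_r mul inv psi_up phi_up alpha beta)) /\
  (is_YB_solution (sol_r' mul inv psi_up phi_up alpha beta) /\
   non_degenerate (sol_r' mul inv psi_up phi_up alpha beta)).
Proof.
move=> HG HK HA Hcen HKA Hab HP HQ Hal Hbe; split.
  exact: (main_r _ _ _ _ _ _ HG HK HA Hcen Hab _ _ _ _ HP HQ Hal Hbe).
exact: (main_r' _ _ _ _ _ _ HG HK HA Hcen Hab _ _ _ _ HP HQ Hal Hbe).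
Qed.
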